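(* Let $\alpha\in\mathbb{N}^n$. Then $1-T_\alpha(x)$ and $1+T_\alpha(x)$ both belong to $\mathcal Q(1-x_1^2,\dots,1-x_n^2)_{2|\alpha|}$, where $|\alpha|=\sum_i\alpha_i$.
   Context: $\Sigma[x]_r$ is the cone of sums of squares of polynomials in $x=(x_1,\dots,x_n)$ of total degree at most $r$; $\mathcal Q(1-x_1^2,\dots,1-x_n^2)_r=\Sigma[x]_r+\sum_{i=1}^n(1-x_i^2)\Sigma[x]_{r-2}$. $T_k(x)=\cos(k\arccos x)$ is the Chebyshev polynomial of the first kind and $T_\alpha(x)=\prod_{i=1}^nT_{\alpha_i}(x_i)$. *)

(* Defs.v *)
From HB Require Import structures.
From mathcomp Require Import all_boot all_order all_algebra.
From mathcomp Require Import reals.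
From mathcomp Require Import mpoly.
Set Implicit Arguments. Unset Strict Implicit. Unset Printing Implicit Defensive.
Import Order.TTheory GRing.Theory Num.Theory.
Local Open Scope ring_scope.

Fixpoint cheb_pair (A : pzRingType) (x : A) (k : nat) : A * A :=
  match k with
  | 0%N => (1, x)
  | k'.+1 => let: (a, b) := cheb_pair x k' in (b, 2%:R * x * b - a)
  end.

Definition cheb (A : pzRingType) (x : A) (k : nat) : A := (cheb_pair x k).1.

Definition chebT (R : realType) (n : nat) (alpha : 'I_n -> nat) : {mpoly R[n]} :=
  \prod_(i < n) cheb ('X_i : {mpoly R[n]}) (alpha i).

(* total degree (msize p = 1 + deg p, msize 0 = 0) *)
Definition tdeg (R : realType) (n : nat) (p : {mpoly R[n]}) : nat := (msize p).-1.

Definition sumsq (R : realType) (n : nat) (s : seq {mpoly R[n]}) : {mpoly R[n]} :=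
  \sum_(q <- s) q ^+ 2.

(* Sigma[x]_r : sums of squares of degree at most r, i.e. sum_j q_j^2 with
   deg (q_j^2) = 2 deg q_j <= r. *)
Definition in_sos (R : realType) (n : nat) (r : nat) (p : {mpoly R[n]}) : Prop :=
  exists s : seq {mpoly R[n]},
    p = sumsq s /\ (forall q, q \in s -> (2 * tdeg q <= r)%N).

(* Q(1-x_1^2,...,1-x_n^2)_r = Sigma_r + sum_i (1 - x_i^2) Sigma_{r-2};
   Sigma_{r-2} = {0} when r < 2 (the condition 2 deg q + 2 <= r). *)
Definition in_quadmod (R : realType) (n : nat) (r : nat) (p : {mpoly R[n]}) : Prop :=
  exists (s0 : seq {mpoly R[n]}) (s : 'I_n -> seq {mpoly R[n]}),
    p = sumsq s0 + \sum_(i < n) (1 - 'X_i ^+ 2) * sumsq (s i)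
    /\ (forall q, q \in s0 -> (2 * tdeg q <= r)%N)
    /\ (forall i q, q \in s i -> (2 * tdeg q + 2 <= r)%N).

(* Main.v *)
Require Import Defs.
From HB Require Import structures.
From mathcomp Require Import all_boot all_order all_algebra.
From mathcomp Require Import reals.
From mathcomp Require Import mpoly.
From mathcomp Require Import ring zify.
Set Implicit Arguments. Unset Strict Implicit.
Import Order.TTheory GRing.Theory Num.Theory.
Local Open Scope ring_scope.

Fixpoint TV (A : comPzRingType) (x : A) (k : nat) : A * A :=
  match k with
  | 0%N => (1, 0)
  | k'.+1 => let: (a, b) := TV x k' in (x * a + (x ^+ 2 - 1) * b, a + x * b)
  end.

Lemma cheb_TV (A : comPzRingType) (x : A) k : cheb_pair x k = ((TV x k).1, (TV x k.+1).1).
Proof.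
elim: k => [|k IH] /=; first by congr pair; ring.
rewrite IH /=; case: (TV x k) => a b /=; congr pair; ring.
Qed.

Lemma pell (A : comPzRingType) (x : A) k : (TV x k).1 ^+ 2 - (x ^+ 2 - 1) * (TV x k).2 ^+ 2 = 1.
Proof.
elim: k => [|k IH] /=; first by ring.
move: IH; case: (TV x k) => a b /= IH.
by rewrite -[RHS]IH; ring.
Qed.

Lemma TV_S (A : comPzRingType) (x : A) k :
  TV x k.+1 = (x * (TV x k).1 + (x ^+ 2 - 1) * (TV x k).2, (TV x k).1 + x * (TV x k).2).
Proof. by rewrite /=; case: (TV x k). Qed.

Definition dl (R : realType) (n : nat) (d : nat) (p : {mpoly R[n]}) := (msize p <= d.+1)%N.

Lemma dl_mono (R : realType) n d d' (p : {mpoly R[n]}) : (d <= d')%N -> dl d p -> dl d' p.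
Proof. rewrite /dl => h1 h2; lia. Qed.

Lemma dl_add (R : realType) n d (p q : {mpoly R[n]}) : dl d p -> dl d q -> dl d (p + q).
Proof.
rewrite /dl => h1 h2; apply: leq_trans (msizeD_le _ _) _; by rewrite geq_max h1 h2.
Qed.

Lemma dl_opp (R : realType) n d (p : {mpoly R[n]}) : dl d p -> dl d (- p).
Proof. by rewrite /dl msizeN. Qed.

Lemma dl_mul (R : realType) n a b (p q : {mpoly R[n]}) : dl a p -> dl b q -> dl (a + b) (p * q).
Proof.
rewrite /dl => h1 h2.
have [->|nz_p] := eqVneq p 0; first by rewrite mul0r msize0.
have [->|nz_q] := eqVneq q 0; first by rewrite mulr0 msize0.
rewrite msizeM //; case E: (msize p + msize q)%N => [|m] //=.
by have := leq_add h1 h2; rewrite E addSn ltnS addnS.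
Qed.

Lemma dl_C (R : realType) n d (c : R) : dl d (c%:MP : {mpoly R[n]}).
Proof. rewrite /dl msizeC; by case: (c != 0). Qed.

Lemma dl_1 (R : realType) n d : dl d (1 : {mpoly R[n]}).
Proof. by rewrite /dl msize1. Qed.

Lemma dl_X (R : realType) n (i : 'I_n) : dl 1 ('X_i : {mpoly R[n]}).
Proof. by rewrite /dl msizeX mdeg1. Qed.

Lemma dl_tdeg (R : realType) n (p : {mpoly R[n]}) : dl (tdeg p) p.
Proof. rewrite /dl /tdeg; lia. Qed.

Lemma tdeg_dl (R : realType) n d (p : {mpoly R[n]}) : dl d p -> (tdeg p <= d)%N.
Proof. rewrite /dl /tdeg; lia. Qed.

Lemma dl_TV (R : realType) n (i : 'I_n) k :
  dl k.+1 (TV ('X_i : {mpoly R[n]}) k.+1).1 /\ dl k (TV ('X_i : {mpoly R[n]}) k.+1).2.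
Proof.
elim: k => [|k [IH1 IH2]].
  rewrite /= mulr0 addr0 mulr1 mulr0 addr0; split; [exact: dl_X | exact: dl_1].
rewrite [TV _ k.+2]TV_S /=; move: IH1 IH2.
set a := (TV _ k.+1).1; set b := (TV _ k.+1).2 => h1 h2.
have hX := dl_X R i.
have hX2 : dl 2 ('X_i ^+ 2 - 1 : {mpoly R[n]}).
  apply: dl_add; last by apply: dl_opp; apply: dl_1.
  by rewrite expr2; apply: (dl_mul hX hX).
split.
  apply: dl_add; first by apply: (dl_mul hX h1).
  by apply: (dl_mono _ (dl_mul hX2 h2)).
apply: dl_add; first by [].
by apply: (dl_mono _ (dl_mul hX h2)).
Qed.

Lemma sumsq_cat (R : realType) n (s t : seq {mpoly R[n]}) : sumsq (s ++ t) = sumsq s + sumsq t.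
Proof. by rewrite /sumsq big_cat. Qed.

Lemma sumsq_map (R : realType) n (t : {mpoly R[n]}) s :
  sumsq (map (fun q => t * q) s) = t ^+ 2 * sumsq s.
Proof. by rewrite /sumsq big_map mulr_sumr; apply: eq_bigr => q _; rewrite exprMn. Qed.

Lemma sumsq_nil (R : realType) n : sumsq ([::] : seq {mpoly R[n]}) = 0.
Proof. by rewrite /sumsq big_nil. Qed.

Lemma sumsq1 (R : realType) n (t : {mpoly R[n]}) : sumsq [:: t] = t ^+ 2.
Proof. by rewrite /sumsq big_cons big_nil addr0. Qed.

Lemma Q_mono (R : realType) n r r' (p : {mpoly R[n]}) : (r <= r')%N -> in_quadmod r p -> in_quadmod r' p.
Proof.
move=> hr [s0 [s [-> [h1 h2]]]]; exists s0, s; split => //; split.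
  by move=> q /h1 h; apply: leq_trans hr.
by move=> i q /h2 h; apply: leq_trans hr.
Qed.

Lemma Q_add (R : realType) n r (p q : {mpoly R[n]}) : in_quadmod r p -> in_quadmod r q -> in_quadmod r (p + q).
Proof.
move=> [s0 [s [-> [h1 h2]]]] [t0 [t [-> [k1 k2]]]].
exists (s0 ++ t0), (fun i => s i ++ t i); split; last split.
- rewrite sumsq_cat.
  have -> : \sum_(i < n) (1 - 'X_i ^+ 2) * sumsq (s i ++ t i) =
    \sum_(i < n) (1 - 'X_i ^+ 2) * sumsq (s i) + \sum_(i < n) (1 - 'X_i ^+ 2) * sumsq (t i).
    rewrite (eq_bigr (fun i => (1 - 'X_i ^+ 2) * sumsq (s i) + (1 - 'X_i ^+ 2) * sumsq (t i))).
      by rewrite big_split.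
    by move=> i _; rewrite sumsq_cat mulrDr.
  ring.
- by move=> x; rewrite mem_cat => /orP [/h1|/k1].
- by move=> i x; rewrite mem_cat => /orP [/h2|/k2].
Qed.

Lemma Q_mulsq (R : realType) n r d (t p : {mpoly R[n]}) : dl d t -> in_quadmod r p -> in_quadmod (r + 2 * d) (t ^+ 2 * p).
Proof.
move=> ht [s0 [s [-> [h1 h2]]]].
exists (map (fun q => t * q) s0), (fun i => map (fun q => t * q) (s i)); split; last split.
- rewrite sumsq_map mulrDr; congr (_ + _).
  under [RHS]eq_bigr => i _ do rewrite sumsq_map mulrCA.
  by rewrite -mulr_sumr.
- move=> x /mapP [q /h1 hq ->].
  have := tdeg_dl (dl_mul ht (dl_tdeg q)); lia.
- move=> i x /mapP [q /h2 hq ->].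
  have := tdeg_dl (dl_mul ht (dl_tdeg q)); lia.
Qed.

Lemma Q_sq (R : realType) n r d (t : {mpoly R[n]}) : dl d t -> (2 * d <= r)%N -> in_quadmod r (t ^+ 2).
Proof.
move=> ht hr; exists [:: t], (fun _ => [::]); split; last split.
- by rewrite sumsq1 big1 ?addr0 // => i _; rewrite /sumsq big_nil mulr0.
- move=> x; rewrite inE => /eqP ->; have := tdeg_dl ht; lia.
- by [].
Qed.

Lemma Q_0 (R : realType) n r : in_quadmod r (0 : {mpoly R[n]}).
Proof.
exists [::], (fun _ => [::]); split; last split => //.
by rewrite sumsq_nil big1 ?addr0 // => i _; rewrite mulr0.
Qed.

Lemma Q_X (R : realType) n r d (i : 'I_n) (V : {mpoly R[n]}) :
  dl d V -> (2 * d + 2 <= r)%N -> in_quadmod r ((1 - 'X_i ^+ 2) * V ^+ 2).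
Proof.
move=> hV hr; exists [::], (fun j => if j == i then [:: V] else [::]); split; last split => //.
- rewrite sumsq_nil add0r (bigD1 i) //= eqxx sumsq1 big1 ?addr0 // => j /negbTE ->.
  by rewrite /sumsq big_nil mulr0.
- move=> j x; case: (j == i) => //; rewrite inE => /eqP ->; have := tdeg_dl hV; lia.
Qed.

Lemma main_l (R : realType) n (alpha : 'I_n -> nat) (l : seq 'I_n) :
  dl (\sum_(i <- l) alpha i)%N (\prod_(i <- l) cheb ('X_i : {mpoly R[n]}) (alpha i)) /\
  in_quadmod (2 * \sum_(i <- l) alpha i)%N (1 - (\prod_(i <- l) cheb ('X_i : {mpoly R[n]}) (alpha i)) ^+ 2).
Proof.
elim: l => [|i l [hP hQ]].
  by rewrite !big_nil expr1n subrr; split; [apply: dl_1 | apply: Q_0].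
rewrite !big_cons.
set P := (\prod_(j <- l) _); set D := (\sum_(j <- l) _)%N.
case E: (alpha i) => [|k].
  by rewrite /cheb /= mul1r add0n; split.
have [h1 h2] := dl_TV R i k.
have hc : cheb ('X_i : {mpoly R[n]}) k.+1 = (TV ('X_i : {mpoly R[n]}) k.+1).1.
  by rewrite /cheb cheb_TV.
rewrite hc; split.
  by apply: dl_mul.
have pl := pell ('X_i : {mpoly R[n]}) k.+1.
set T := (TV _ k.+1).1 in h1 pl *; set V := (TV _ k.+1).2 in h2 pl *.
have -> : 1 - (T * P) ^+ 2 = (1 - 'X_i ^+ 2) * V ^+ 2 + T ^+ 2 * (1 - P ^+ 2).
  transitivity ((T ^+ 2 - ('X_i ^+ 2 - 1) * V ^+ 2) - (T * P) ^+ 2); first by rewrite pl.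
  ring.
apply: Q_add.
  apply: (Q_mono _ (Q_X (r := (2 * k + 2)%N) i h2 _)) => //; lia.
apply: (Q_mono _ (Q_mulsq h1 hQ)); lia.
Qed.


Theorem lemma6 (R : realType) (n : nat) (alpha : 'I_n -> nat) :
  in_quadmod (2 * \sum_(i < n) alpha i)%N (1 - chebT R alpha) /\
  in_quadmod (2 * \sum_(i < n) alpha i)%N (1 + chebT R alpha).
Proof.
have [hP hQ] := main_l R alpha (index_enum 'I_n).
rewrite /chebT.
set P := (\prod_(i <- _) _) in hP hQ *.
set D := (\sum_(i <- _) _)%N in hP hQ *.
set e : {mpoly R[n]} := (2^-1 : R)%:MP.
have he : 2%:R * e = 1.
  by rewrite /e -(rmorph_nat (mpolyC n (R := R))) -rmorphM /= mulfV ?pnatr_eq0.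
have he0 : dl 0 e by apply: dl_C.
have key : forall u : {mpoly R[n]}, dl D u ->
  in_quadmod (2 * D)%N (e ^+ 2 * u ^+ 2 + e ^+ 2 * u ^+ 2 + e ^+ 2 * (1 - P ^+ 2) + e ^+ 2 * (1 - P ^+ 2)).
  move=> u hu.
  have hu2 := Q_sq hu (leqnn _).
  have A1 := Q_mulsq he0 hu2; have A2 := Q_mulsq he0 hQ; rewrite muln0 addn0 in A1 A2.
  by do !apply: Q_add.
split.
  have := key (1 - P) (dl_add (dl_1 _ _ _) (dl_opp hP)).
  congr in_quadmod.
  transitivity ((2%:R * e) ^+ 2 * (1 - P)); first by ring.
  by rewrite he expr1n mul1r.
have := key (1 + P) (dl_add (dl_1 _ _ _) hP).
congr in_quadmod.
transitivity ((2%:R * e) ^+ 2 * (1 + P)); first by ring.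
by rewrite he expr1n mul1r.
Qed.
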